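(* Let $n\ge 3$ and let $\mathcal M=\Delta^{n-1}_{>0}=\{q\in\mathbb R^n: q_i>0,\ \sum_i q_i=1\}$ be the open probability simplex with Fisher--Rao metric $g_F(q)[v,w]=\sum_{i=1}^n v_iw_i/q_i$ for $v,w\in T_q\mathcal M=\{v\in\mathbb R^n:\sum_i v_i=0\}$. Let $\widehat V\in\mathrm{End}(\mathbb R^n)$ and decompose $\widehat V=\widehat S+\widehat F$ with $\widehat S^\top=\widehat S$, $\widehat F^\top=-\widehat F$. For any $\widehat W\in\mathrm{End}(\mathbb R^n)$ let $\mathcal T(\widehat W)\in\Omega^1(\mathcal M)$ denote the pullback $\iota^*\big(\bar\alpha^{\widehat W}|_{\mathbb S^{n-1}_+}\big)$, where $\bar\alpha^{\widehat W}$ is the $1$-form on the unit sphere $\mathbb S^{n-1}\subset\mathbb R^n$ given by $\bar\alpha^{\widehat W}_\rho(\eta)=\langle \eta,(I-\rho\rho^\top)\widehat W\rho\rangle$ for $\eta\in T_\rho\mathbb S^{n-1}$, $\mathbb S^{n-1}_+=\{\rho\in\mathbb S^{n-1}:\rho_i>0\ \forall i\}$, and $\iota:\mathcal M\to\mathbb S^{n-1}_+$, $\iota(q)=\sqrt q=(\sqrt{q_1},\dots,\sqrt{q_n})$. Set $\beta=\mathcal T(\widehat V)$, $\beta^{\widehat S}=\mathcal T(\widehat S)$, $\beta^{\widehat F}=\mathcal T(\widehat F)$, so that $\beta=\beta^{\widehat S}+\beta^{\widehat F}$. Then: (1) the smooth function $U(q):=\tfrac12(\sqrt q)^\top\widehat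 S\sqrt q$ on $\mathcal M$ satisfies $\beta^{\widehat S}=dU$; (2) there exists $\gamma\in\Omega^2(\mathcal M)$ such that $\beta^{\widehat F}=\delta_{g_F}\gamma$, where $\delta_{g_F}$ is the codifferential of $g_F$. Consequently $\beta=dU+\delta_{g_F}\gamma$.
   Context: $\langle\cdot,\cdot\rangle$ is the Euclidean inner product on $\mathbb R^n$. The sphere $\mathbb S^{n-1}$ carries the round metric induced by $\langle\cdot,\cdot\rangle$. *)

(* Defs.v *)
From HB Require Import structures.
From mathcomp Require Import all_boot all_order all_algebra.
From mathcomp Require Import all_classical all_reals all_analysis.
Set Implicit Arguments. Unset Strict Implicit. Unset Printing Implicit Defensive.
Import Order.TTheory GRing.Theory Num.Theory.
Import numFieldNormedType.Exports.
Local Open Scope ring_scope.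
Local Open Scope classical_set_scope.

(* We work with n = m.+1 and the global chart of the open simplex
   x = (q_1,...,q_m) |-> q = (x_1,...,x_m, 1 - sum_j x_j).                    *)

Section Defs.
Variable R : realType.
Variable m : nat.

Definition chart_dom : set 'rV[R]_m :=
  [set x | (forall j, 0 < x 0 j) /\ \sum_j x 0 j < 1].

Definition qof (x : 'rV[R]_m) : 'rV[R]_m.+1 :=
  \row_(i < m.+1) match unlift ord_max i with
                  | Some j => x 0 j
                  | None => 1 - \sum_j x 0 j
                  end.

Definition sqrtq (x : 'rV[R]_m) : 'rV[R]_m.+1 := map_mx Num.sqrt (qof x).

Definition ecoord (i : 'I_m) : 'rV[R]_m := delta_mx 0 i.

(* the 1-form on the sphere: alpha^W_rho(eta) = <eta, (I - rho rho^T) W rho>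
   (vectors written as rows) *)
Definition alphaW (W : 'M[R]_m.+1) (rho eta : 'rV[R]_m.+1) : R :=
  (eta *m (1%:M - rho^T *m rho) *m W *m rho^T) 0 0.

(* T(W) = iota^* (alpha^W restricted to S^{n-1}_+), in chart components:
   T(W)_i(x) = alpha^W_{sqrt q(x)} ( d(sqrt o q)_x (d/dx_i) ) *)
Definition Tform (W : 'M[R]_m.+1) (x : 'rV[R]_m) : 'rV[R]_m :=
  \row_(i < m) alphaW W (sqrtq x) (derive sqrtq x (ecoord i)).

Definition gF (q v w : 'rV[R]_m.+1) : R := \sum_k v 0 k * w 0 k / q 0 k.

Definition gmat (x : 'rV[R]_m) : 'M[R]_m :=
  \matrix_(i, j) gF (qof x) (derive qof x (ecoord i)) (derive qof x (ecoord j)).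

Definition dfun (f : 'rV[R]_m -> R) (x : 'rV[R]_m) : 'rV[R]_m :=
  \row_(i < m) derive f x (ecoord i).

(* codifferential of a 2-form gamma (gamma x antisymmetric, components gamma_ab)
   with respect to the metric g (standard coordinate formula):
   (delta gamma)_j = - g_{jk} (1/sqrt|g|) d_i ( sqrt|g| g^{ia} g^{kb} gamma_ab ) *)
Definition codiff2 (gamma : 'rV[R]_m -> 'M[R]_m) (x : 'rV[R]_m) : 'rV[R]_m :=
  \row_(j < m) - \sum_(k < m) gmat x j k / Num.sqrt (\det (gmat x)) *
     \sum_(i < m) derive (fun y => Num.sqrt (\det (gmat y)) *
                         (invmx (gmat y) *m gamma y *m invmx (gmat y)) i k)
                         x (ecoord i).

Definition iterD (vs : seq 'rV[R]_m) (f : 'rV[R]_m -> R) : 'rV[R]_m -> R :=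
  foldr (fun v g => fun y => derive g y v) f vs.

Definition smooth_on (D : set 'rV[R]_m) (f : 'rV[R]_m -> R) : Prop :=
  forall (vs : seq 'rV[R]_m) (x : 'rV[R]_m), D x -> differentiable (iterD vs f) x.

Definition two_form (gamma : 'rV[R]_m -> 'M[R]_m) : Prop :=
  (forall x, chart_dom x -> (gamma x)^T = - gamma x) /\
  (forall a b, smooth_on chart_dom (fun y => gamma y a b)).

End Defs.

(* Main.v *)
Require Import Defs.
From HB Require Import structures.
From mathcomp Require Import all_boot all_order all_algebra.
From mathcomp Require Import all_classical all_reals all_analysis.
From mathcomp Require Import ring lra.
Import Order.TTheory GRing.Theory Num.Theory.
Import numFieldNormedType.Exports.
Local Open Scope ring_scope.
Local Open Scope classical_set_scope.

Section S.
Context {R : realType} {V W : normedModType R}.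

Lemma diff_near0 (h : V -> W) (x : V) : (\forall y \near x, h y = 0) -> differentiable h x.
Proof.
move=> H.
have hx : h x = 0 by apply: nbhs_singleton H.
have P : h \o shift x = cst (h x) + (\0 : {linear V -> W}) +o_ (nbhs (0:V)) id.
  apply/eqaddoP => e e0 /=.
  move/nbhs0P: H; apply: filterS => k hk.
  have -> : (h \o +%R^~ x - (cst (h x) + \0)) k = 0.
    by rewrite !fctE /= (addrC k x) hk hx addr0 subr0.
  by rewrite normr0 mulr_ge0 // ltW.
have c0 : continuous (\0 : {linear V -> W}) by move=> ?; exact: cst_continuous.
apply/diff_locallyP; rewrite (diff_unique _ P) //.
Qed.

Lemma diff_near_eq (f g : V -> W) (x : V) : (\forall y \near x, f y = g y) ->
  differentiable f x -> differentiable g x.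
Proof.
move=> H df.
have -> : g = f + (g - f) by rewrite addrC subrK.
apply: differentiableD => //; apply: diff_near0.
by apply: filterS H => y /= fg; rewrite !fctE fg subrr.
Qed.
End S.
Section Calc.
Context {R : realType} {V : normedModType R}.
Implicit Types (f g : V -> R) (x v : V).

Lemma dD f g x : differentiable f x -> differentiable g x ->
  differentiable (fun y => f y + g y) x.
Proof. by move=> df dg; exact: (differentiableD df dg). Qed.

Lemma dM f g x : differentiable f x -> differentiable g x ->
  differentiable (fun y => f y * g y) x.
Proof. by move=> df dg; exact: (differentiableM df dg). Qed.

Lemma dC (c : R) x : differentiable (fun _ : V => c) x.
Proof. exact: differentiable_cst. Qed.

Lemma dV f x : differentiable f x -> f x != 0 -> differentiable (fun y => (f y)^-1) x.
Proof. exact: differentiableV. Qed.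

Lemma derD f g x v : differentiable f x -> differentiable g x ->
  derive (fun y => f y + g y) x v = derive f x v + derive g x v.
Proof. by move=> df dg; rewrite (deriveD (diff_derivable (v:=v) df) (diff_derivable (v:=v) dg)). Qed.

Lemma derM f g x v : differentiable f x -> differentiable g x ->
  derive (fun y => f y * g y) x v = f x * derive g x v + g x * derive f x v.
Proof. by move=> df dg; rewrite (deriveM (diff_derivable (v:=v) df) (diff_derivable (v:=v) dg)). Qed.

Lemma dN f x : differentiable f x -> differentiable (fun y => - f y) x.
Proof. by move=> df; exact: (differentiableN df). Qed.

Lemma derN f x v : differentiable f x ->
  derive (fun y => - f y) x v = - derive f x v.
Proof. by move=> df; rewrite (deriveN (diff_derivable (v:=v) df)). Qed.

Lemma derC (c : R) x v : derive (fun _ : V => c) x v = 0.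
Proof. exact: derive_cst. Qed.

Lemma derV f x v : differentiable f x -> f x != 0 ->
  derive (fun y => (f y)^-1) x v = - (f x) ^- 2 * derive f x v.
Proof. by move=> df f0; rewrite (deriveV f0 (diff_derivable (v:=v) df)). Qed.

Lemma dsum k (F : 'I_k -> V -> R) x : (forall i, differentiable (F i) x) ->
  differentiable (fun y => \sum_(i < k) F i y) x.
Proof.
move=> dF; elim: k F dF => [|k IH] F dF.
  by under eq_fun do rewrite big_ord0; exact: dC.
under eq_fun do rewrite big_ord_recr /=.
by apply: dD => //; apply: IH.
Qed.

Lemma dersum k (F : 'I_k -> V -> R) x v : (forall i, differentiable (F i) x) ->
  derive (fun y => \sum_(i < k) F i y) x v = \sum_(i < k) derive (F i) x v.
Proof.
move=> dF; elim: k F dF => [|k IH] F dF.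
  by under eq_fun do rewrite big_ord0; rewrite big_ord0 derC.
under eq_fun do rewrite big_ord_recr /=.
rewrite derD ?IH ?big_ord_recr //; last exact: dsum.
Qed.

Lemma dprod (I : Type) (s : seq I) (F : I -> V -> R) x :
  (forall i, differentiable (F i) x) ->
  differentiable (fun y => \prod_(i <- s) F i y) x.
Proof.
move=> dF; elim: s => [|a s IH].
  by under eq_fun do rewrite big_nil; exact: dC.
by under eq_fun do rewrite big_cons; apply: dM.
Qed.

Lemma derprod (I : Type) (s : seq I) (F : I -> V -> R) x v :
  (forall i, differentiable (F i) x) -> (forall i, F i x != 0) ->
  derive (fun y => \prod_(i <- s) F i y) x v =
  (\prod_(i <- s) F i x) * \sum_(i <- s) derive (F i) x v / F i x.
Proof.
move=> dF nF; elim: s => [|a s IH].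
  by under eq_fun do rewrite big_nil; by rewrite derC !big_nil mulr0.
under eq_fun do rewrite big_cons.
rewrite derM //; last exact: dprod.
rewrite IH !big_cons.
by field; apply: nF.
Qed.

Lemma near_derive f g x v : (\forall y \near x, f y = g y) ->
  derive f x v = derive g x v.
Proof. exact: near_eq_derive. Qed.

End Calc.
Section Setting.
Variable R : realType.
Variable m : nat.
Local Notation D := (chart_dom (R:=R) (m:=m)).

Definition cc (a : 'I_m.+1) (v : 'rV[R]_m) : R :=
  match unlift ord_max a with Some j => v 0 j | None => - \sum_j v 0 j end.
Definition qa (a : 'I_m.+1) (y : 'rV[R]_m) : R := qof y 0 a.
Definition rho (a : 'I_m.+1) (y : 'rV[R]_m) : R := Num.sqrt (qa a y).

Lemma qaE a y : qa a y =
  match unlift ord_max a with Some j => y 0 j | None => 1 - \sum_j y 0 j end.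
Proof. by rewrite /qa /qof mxE. Qed.

Lemma sqrtqE y a : sqrtq y 0 a = rho a y.
Proof. by rewrite /sqrtq mxE. Qed.

Lemma coord_diff (j : 'I_m) (x : 'rV[R]_m) : differentiable (fun y : 'rV[R]_m => y 0 j) x.
Proof. exact: differentiable_coord. Qed.

Lemma coord_derive (j : 'I_m) (x v : 'rV[R]_m) : derive (fun y : 'rV[R]_m => y 0 j) x v = v 0 j.
Proof.
have := derive_mx (M := id) (t := x) (v := v) (@derivable_id _ _ x v).
rewrite derive_id => H; have := congr1 (fun M : 'rV[R]_m => M 0 j) H; by rewrite mxE /= => ->.
Qed.

Lemma qa_diff a x : differentiable (qa a) x.
Proof.
have -> : qa a = fun y => match unlift ord_max a with Some j => y 0 j | None => 1 - \sum_j y 0 j end.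
  by apply: funext => y; rewrite qaE.
case: (unlift ord_max a) => [j|]; first exact: coord_diff.
apply: dD; first exact: dC.
apply: dN.
by apply: dsum => j; exact: coord_diff.
Qed.

Lemma qa_derive a x v : derive (qa a) x v = cc a v.
Proof.
have -> : qa a = fun y => match unlift ord_max a with Some j => y 0 j | None => 1 - \sum_j y 0 j end.
  by apply: funext => y; rewrite qaE.
rewrite /cc; case: (unlift ord_max a) => [j|]; first exact: coord_derive.
have dS : differentiable (fun y : 'rV[R]_m => \sum_j y 0 j) x.
  by apply: dsum => j; exact: coord_diff.
rewrite derD //; last first.
  exact: dN.
rewrite derC add0r derN //.
rewrite dersum; last by move=> i; exact: coord_diff.
by congr (- _); apply: eq_bigr => i _; rewrite coord_derive.
Qed.

Lemma rho_diff a x : 0 < qa a x -> differentiable (rho a) x.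
Proof.
move=> q0; apply: (differentiable_comp (qa_diff a x)).
apply/derivable1_diffP.
by have [] := is_derive1_sqrt q0.
Qed.

Lemma rho_derive a x v : 0 < qa a x -> derive (rho a) x v = cc a v / (2 * rho a x).
Proof.
move=> q0.
have ds : differentiable Num.sqrt (qa a x).
  by apply/derivable1_diffP; have [] := is_derive1_sqrt q0.
rewrite deriveE; last exact: rho_diff.
rewrite /rho (_ : (fun y => Num.sqrt (qa a y)) = Num.sqrt \o qa a) //.
rewrite diff_comp //; last exact: qa_diff.
rewrite /= -(@deriveE _ _ _ (qa a) x v (qa_diff a x)).
rewrite qa_derive deriv1E; last exact/derivable1_diffP.
by rewrite derive1E derive_sqrt // mulrC.
Qed.


Lemma D_qa y : D y -> forall a, 0 < qa a y.
Proof.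
case=> hj hs a; rewrite qaE; case: unlift => [j|]; first exact: hj.
by rewrite subr_gt0.
Qed.

Lemma qa_D y : (forall a, 0 < qa a y) -> D y.
Proof.
move=> H; split.
  by move=> j; have := H (lift ord_max j); rewrite qaE liftK.
by have := H ord_max; rewrite qaE unlift_none subr_gt0.
Qed.

Lemma D_near x : D x -> \forall y \near x, D y.
Proof.
move=> Dx.
have : \forall y \near x, forall a, 0 < qa a y.
  apply: (@filter_forall _ _ (fun a y => 0 < qa a y) (nbhs x) _) => a.
  apply: (cvgr_gt (f := qa a) (qa a x)); last exact: D_qa Dx a.
  exact: differentiable_continuous (qa_diff a x).
by apply: filterS => y; exact: qa_D.
Qed.

Lemma rho_gt0 a y : D y -> 0 < rho a y.
Proof. by move=> Dy; rewrite sqrtr_gt0 D_qa. Qed.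

Lemma rho_neq0 a y : D y -> rho a y != 0.
Proof. by move=> Dy; rewrite gt_eqF // rho_gt0. Qed.

Lemma rho_sq a y : D y -> rho a y ^+ 2 = qa a y.
Proof. by move=> Dy; rewrite sqr_sqrtr // ltW // D_qa. Qed.

Inductive Alg : ('rV[R]_m -> R) -> Prop :=
| AlgC c : Alg (fun _ => c)
| AlgR a : Alg (rho a)
| AlgI a : Alg (fun y => (rho a y)^-1)
| AlgD f g : Alg f -> Alg g -> Alg (fun y => f y + g y)
| AlgM f g : Alg f -> Alg g -> Alg (fun y => f y * g y)
| AlgE f g : Alg f -> (forall y, D y -> f y = g y) -> Alg g.
Arguments AlgD {f g}. Arguments AlgM {f g}. Arguments AlgE {f g}.

Lemma Alg_prop f : Alg f ->
  (forall x, D x -> differentiable f x) /\ (forall v, Alg (fun y => derive f y v)).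
Proof.
elim=> {f}.
- move=> c; split=> [x _|v]; first exact: dC.
  by apply: (AlgE (AlgC 0)) => y _; rewrite derC.
- move=> a; split=> [x Dx|v]; first by apply: rho_diff; exact: D_qa.
  apply: (AlgE (AlgM (AlgC (cc a v / 2)) (AlgI a))) => y Dy.
  by rewrite rho_derive ?D_qa // invfM mulrA.
- move=> a; split=> [x Dx|v].
    by apply: dV; [apply: rho_diff; exact: D_qa | exact: rho_neq0].
  apply: (AlgE (AlgM (AlgC (- cc a v / 2)) (AlgM (AlgI a) (AlgM (AlgI a) (AlgI a))))) => y Dy.
  rewrite derV ?rho_neq0 //; last by apply: rho_diff; exact: D_qa.
  rewrite rho_derive ?D_qa //.
  by have := rho_neq0 a y Dy; move: (rho a y) => r r0; field.
- move=> f g _ [df Df] _ [dg Dg]; split=> [x Dx|v]; first by apply: dD; auto.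
  apply: (AlgE (AlgD (Df v) (Dg v))) => y Dy.
  by rewrite derD //; auto.
- move=> f g Af [df Df] Ag [dg Dg]; split=> [x Dx|v]; first by apply: dM; auto.
  apply: (AlgE (AlgD (AlgM Af (Dg v)) (AlgM Ag (Df v)))) => y Dy.
  by rewrite derM //; auto.
- move=> f g _ [df Df] fg; split=> [x Dx|v].
    apply: (diff_near_eq f g x _ (df x Dx)).
    by apply: filterS (D_near x Dx) => y; exact: fg.
  apply: (AlgE (Df v)) => y Dy; apply: near_derive.
  by apply: filterS (D_near y Dy) => z; exact: fg.
Qed.

Lemma Alg_smooth f : Alg f -> smooth_on D f.
Proof.
move=> Af.
have H : forall vs, Alg (Defs.iterD vs f).
  elim=> [|v vs IH] //=; exact: ((Alg_prop _ IH).2 v).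
by move=> vs x Dx; exact: ((Alg_prop _ (H vs)).1 x Dx).
Qed.

Lemma Alg_sum k (F : 'I_k -> 'rV[R]_m -> R) : (forall i, Alg (F i)) ->
  Alg (fun y => \sum_(i < k) F i y).
Proof.
elim: k F => [|k IH] F AF.
  by apply: (AlgE (AlgC 0)) => y _; rewrite big_ord0.
apply: (AlgE (AlgD (IH (fun i => F (widen_ord (leqnSn k) i)) (fun i => AF _)) (AF ord_max))).
by move=> y _; rewrite big_ord_recr.
Qed.

Lemma Alg_prod k (F : 'I_k -> 'rV[R]_m -> R) : (forall i, Alg (F i)) ->
  Alg (fun y => \prod_(i < k) F i y).
Proof.
elim: k F => [|k IH] F AF.
  by apply: (AlgE (AlgC 1)) => y _; rewrite big_ord0.
apply: (AlgE (AlgM (IH (fun i => F (widen_ord (leqnSn k) i)) (fun i => AF _)) (AF ord_max))).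
by move=> y _; rewrite big_ord_recr.
Qed.


Lemma rho_diffD a x : D x -> differentiable (rho a) x.
Proof. by move=> Dx; apply: rho_diff; exact: D_qa. Qed.

Lemma rho_deriveD a x v : D x -> derive (rho a) x v = cc a v / (2 * rho a x).
Proof. by move=> Dx; apply: rho_derive; exact: D_qa. Qed.

Definition etav (v x : 'rV[R]_m) : 'rV[R]_m.+1 := \row_a (cc a v / (2 * rho a x)).

Lemma der_sqrtq x v : D x -> derive (@sqrtq R m) x v = etav v x.
Proof.
move=> Dx.
have Hf : forall (i : 'I_1) a, (fun t => sqrtq t i a) = rho a.
  by move=> i a; apply: funext => t; rewrite (ord1 i) sqrtqE.
rewrite derive_mx; last first.
  apply/derivable_mxP => i a; rewrite Hf; apply: diff_derivable; exact: rho_diffD.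
apply/rowP => a; rewrite !mxE Hf; exact: rho_deriveD.
Qed.

Lemma der_qof x v : derive (@qof R m) x v = \row_a cc a v.
Proof.
have Hf : forall (i : 'I_1) a, (fun t => qof t i a) = qa a.
  by move=> i a; apply: funext => t; rewrite (ord1 i).
rewrite derive_mx; last first.
  apply/derivable_mxP => i a; rewrite Hf; apply: diff_derivable; exact: qa_diff.
apply/rowP => a; rewrite !mxE Hf; exact: qa_derive.
Qed.

Lemma cc_lift i v : cc (lift ord_max i) v = v 0 i.
Proof. by rewrite /cc liftK. Qed.

Lemma cc_max v : cc ord_max v = - \sum_j v 0 j.
Proof. by rewrite /cc unlift_none. Qed.

Lemma sum_ord_max (F : 'I_m.+1 -> R) :
  \sum_a F a = \sum_(i < m) F (lift ord_max i) + F ord_max.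
Proof.
rewrite big_ord_recr /=; congr (_ + _); apply: eq_bigr => i _.
by congr F; apply/val_inj => /=; rewrite /bump leqNgt ltn_ord.
Qed.

Lemma prod_ord_max (F : 'I_m.+1 -> R) :
  \prod_a F a = \prod_(i < m) F (lift ord_max i) * F ord_max.
Proof.
rewrite big_ord_recr /=; congr (_ * _); apply: eq_bigr => i _.
by congr F; apply/val_inj => /=; rewrite /bump leqNgt ltn_ord.
Qed.

Lemma sum_cc v : \sum_a cc a v = 0.
Proof.
rewrite sum_ord_max cc_max; under eq_bigr do rewrite cc_lift.
by rewrite subrr.
Qed.

Lemma eta_rho x v : D x -> (etav v x *m (sqrtq x)^T) 0 0 = 0.
Proof.
move=> Dx; rewrite mxE.
have -> : \sum_a etav v x 0 a * (sqrtq x)^T a 0 = \sum_a cc a v / 2.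
  apply: eq_bigr => a _; rewrite [(sqrtq x)^T a 0]mxE sqrtqE mxE.
  by have := rho_neq0 a x Dx; move: (rho a x) => r r0; field.
by rewrite -mulr_suml sum_cc mul0r.
Qed.

Lemma alphaW_simpl W (rh et : 'rV[R]_m.+1) : (et *m rh^T) 0 0 = 0 ->
  alphaW W rh et = (et *m W *m rh^T) 0 0.
Proof.
move=> H; rewrite /alphaW mulmxBr mulmx1 mulmxA (mx11_scalar (et *m rh^T)) H.
by rewrite mul_scalar_mx scale0r subr0.
Qed.


Lemma quadE n (r s : 'rV[R]_n) (M : 'M[R]_n) :
  (r *m M *m s^T) 0 0 = \sum_b (\sum_a r 0 a * M a b) * s 0 b.
Proof. by rewrite mxE; apply: eq_bigr => b _; rewrite !mxE. Qed.

Lemma derCM (c : R) (f : 'rV[R]_m -> R) x v : differentiable f x ->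
  derive (fun y => c * f y) x v = c * derive f x v.
Proof. by move=> df; rewrite (@derM _ _ (fun _ => c) f x v (dC c x) df) derC mulr0 addr0. Qed.

Lemma derMC (c : R) (f : 'rV[R]_m -> R) x v : differentiable f x ->
  derive (fun y => f y * c) x v = derive f x v * c.
Proof. by move=> df; rewrite (@derM _ _ f (fun _ => c) x v df (dC c x)) derC mulr0 add0r mulrC. Qed.

Lemma dMC (c : R) (f : 'rV[R]_m -> R) x : differentiable f x ->
  differentiable (fun y => f y * c) x.
Proof. by move=> df; apply: dM => //; exact: dC. Qed.

Lemma part1 (S : 'M[R]_m.+1) x : S^T = S -> D x ->
  Tform S x = dfun (fun y => 2^-1 * (sqrtq y *m S *m (sqrtq y)^T) 0 0) x.
Proof.
move=> hS Dx.
have SE a b : S a b = S b a by rewrite -{1}hS mxE.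
have -> : (fun y => 2^-1 * (sqrtq y *m S *m (sqrtq y)^T) 0 0) =
    (fun y => 2^-1 * \sum_b (\sum_a rho a y * S a b) * rho b y).
  by apply: funext => y; rewrite quadE; under eq_bigr do under eq_bigr do rewrite sqrtqE; under eq_bigr do rewrite sqrtqE.
apply/rowP => i; rewrite !mxE der_sqrtq // alphaW_simpl ?eta_rho // quadE.
under eq_bigr do rewrite sqrtqE.
have dg : forall b, differentiable (fun y => \sum_a rho a y * S a b) x.
  by move=> b; apply: dsum => a; apply: dMC; exact: rho_diffD.
rewrite derCM; last by apply: dsum => b; apply: dM => //; exact: rho_diffD.
rewrite dersum; last by move=> b; apply: dM => //; exact: rho_diffD.
set e := fun a => cc a (ecoord R i) / (2 * rho a x).
have eE : forall a, etav (ecoord R i) x 0 a = e a by move=> a; rewrite mxE.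
under eq_bigr do under eq_bigr do rewrite eE.
have E1 : forall b, derive (fun y => (\sum_a rho a y * S a b) * rho b y) x (ecoord R i) =
   (\sum_a rho a x * S a b) * e b + rho b x * \sum_a e a * S a b.
  move=> b; apply: etrans; first exact: (derM _ _ _ (ecoord R i) (dg b) (rho_diffD b x Dx)).
  rewrite rho_deriveD //; congr (_ + _); congr (_ * _).
  apply: etrans; first exact: (dersum m.+1 (fun a y => rho a y * S a b) x (ecoord R i) (fun a => dMC (S a b) _ _ (rho_diffD a x Dx))).
  apply: eq_bigr => a _.
  apply: etrans; first exact: (derMC (S a b) _ _ (ecoord R i) (rho_diffD a x Dx)).
  by rewrite rho_deriveD.
rewrite (eq_bigr _ (fun b _ => E1 b)).
rewrite big_split /=.
have -> : \sum_b (\sum_a rho a x * S a b) * e b =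
          \sum_b (\sum_a e a * S a b) * rho b x.
  under eq_bigr do rewrite mulr_suml.
  rewrite exchange_big /=; apply: eq_bigr => b _; rewrite mulr_suml.
  by apply: eq_bigr => a _; rewrite SE; ring.
have -> : \sum_b rho b x * (\sum_a e a * S a b) =
          \sum_b (\sum_a e a * S a b) * rho b x.
  by apply: eq_bigr => b _; rewrite mulrC.
by field.
Qed.


Lemma det_rank1 k (A Ai : 'M[R]_k) (u w : 'rV[R]_k) : A *m Ai = 1%:M ->
  \det (A + u^T *m w) = \det A * (1 + (w *m Ai *m u^T) 0 0).
Proof.
move=> AAi.
pose M := block_mx (1%:M : 'M[R]_1) w (- u^T) A.
pose L1 := block_mx (1%:M : 'M[R]_1) 0 u^T (1%:M : 'M[R]_k).
pose L2 := block_mx (1%:M : 'M[R]_1) 0 (Ai *m u^T) (1%:M : 'M[R]_k).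
have E1 : L1 *m M = block_mx 1%:M w 0 (A + u^T *m w).
  by rewrite /L1 /M mulmx_block !mul1mx !mulmx1 !mul0mx !addr0 subrr addrC.
have E2 : M *m L2 = block_mx (1%:M + w *m Ai *m u^T) w 0 A.
  rewrite /L2 /M mulmx_block !mul1mx !mulmx1 !mulmx0 !add0r !mulmxA AAi mul1mx addNr.
  by [].
have dL1 : \det L1 = 1 by rewrite /L1 det_lblock !det1 mulr1.
have dL2 : \det L2 = 1 by rewrite /L2 det_lblock !det1 mulr1.
have := congr1 determinant E1; rewrite det_mulmx dL1 mul1r det_ublock det1 mul1r => H.
apply: etrans (esym H) _.
have := congr1 determinant E2; rewrite det_mulmx dL2 mulr1 det_ublock => ->.
by rewrite det_mx11 mulrC; congr (_ * _); rewrite mxE [X in X + _]mxE eqxx.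
Qed.

Lemma ecoordE (i j : 'I_m) : ecoord R i 0 j = (j == i)%:R.
Proof. by rewrite /ecoord mxE eqxx. Qed.

Lemma cc_lift_e l i : cc (lift ord_max l) (ecoord R i) = (l == i)%:R.
Proof. by rewrite cc_lift ecoordE. Qed.

Lemma cc_max_e i : cc ord_max (ecoord R i) = -1.
Proof.
rewrite cc_max (bigD1 i) //= ecoordE eqxx big1 ?addr0 //.
by move=> j /negPf ji; rewrite ecoordE ji.
Qed.

Lemma sum_delta (F : 'I_m -> R) i : \sum_l (l == i)%:R * F l = F i.
Proof.
rewrite (bigD1 i) //= eqxx mul1r big1 ?addr0 //.
by move=> j /negPf ji; rewrite ji mul0r.
Qed.

Lemma gmatE x j k : gmat x j k = \sum_a cc a (ecoord R j) * cc a (ecoord R k) / qa a x.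
Proof. by rewrite /gmat mxE /gF !der_qof; apply: eq_bigr => a _; rewrite /qa; congr (_ * _ / _); rewrite mxE. Qed.

Lemma qa_lift l y : qa (lift ord_max l) y = y 0 l.
Proof. by rewrite qaE liftK. Qed.

Lemma gmatE2 x j k : gmat x j k = (j == k)%:R / x 0 j + (qa ord_max x)^-1.
Proof.
rewrite gmatE sum_ord_max cc_max_e cc_max_e mulN1r opprK mul1r; congr (_ + _).
under eq_bigr do rewrite !cc_lift_e qa_lift.
rewrite (bigD1 j) //= eqxx mul1r big1 ?addr0.
  by rewrite eq_sym.
by move=> l /negPf lj; rewrite lj mul0r mul0r.
Qed.

Lemma det_gmat x : D x -> \det (gmat x) = (\prod_a qa a x)^-1.
Proof.
move=> Dx.
have q0 := D_qa x Dx.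
pose A := diag_mx (\row_j (x 0 j)^-1).
pose Ai := diag_mx (\row_j (x 0 j)).
pose u := const_mx (qa ord_max x)^-1 : 'rV[R]_m.
pose w := const_mx 1 : 'rV[R]_m.
have xj0 : forall j, x 0 j != 0 by move=> j; have := q0 (lift ord_max j); rewrite qa_lift => /gt_eqF ->.
have GE : gmat x = A + u^T *m w.
  apply/matrixP => j k; rewrite gmatE2 !mxE big_ord1 !mxE mulr1.
  by case: (eqVneq j k) => [->|jk] /=; rewrite ?mulr1n ?mulr0n ?mul1r ?mul0r.
have AAi : A *m Ai = 1%:M.
  apply/matrixP => j k; rewrite mul_diag_mx !mxE.
  case: (eqVneq j k) => [->|jk] /=; rewrite ?mulr1n ?mulr0n ?mulr0 //.
  by rewrite mulVf.
rewrite GE (det_rank1 _ _ _ u w AAi) det_diag.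
have -> : (w *m Ai *m u^T) 0 0 = (\sum_j x 0 j) / qa ord_max x.
  rewrite mulr_suml mxE; apply: eq_bigr => j _.
  rewrite !mxE (bigD1 j) //= big1 ?addr0.
    by rewrite /w /Ai !mxE eqxx mulr1n mul1r.
  by move=> l lj; rewrite /Ai !mxE (negPf lj) mulr0n mulr0.
rewrite [in RHS]prod_ord_max; under eq_bigr do rewrite mxE; under [X in _ = (X * _)^-1]eq_bigr do rewrite qa_lift.
rewrite prodfV.
have Pn0 : \prod_j x 0 j != 0 by apply/prodf_neq0 => j _; exact: xj0.
have qn0 : qa ord_max x != 0 by rewrite gt_eqF.
have sE : \sum_j x 0 j = 1 - qa ord_max x by rewrite qaE unlift_none; ring.
rewrite sE; move: Pn0 qn0; move: (\prod_j x 0 j) (qa ord_max x) => P q P0 qn.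
by field; rewrite qn P0.
Qed.

Local Notation wl := (lift ord_max).
Local Notation nn := (@ord_max m).

Definition Qf (y : 'rV[R]_m) : R := \prod_(l < m) (rho (wl l) y)^-1.
Definition Tf a b c (y : 'rV[R]_m) : R := rho a y * rho b y * rho c y * Qf y.
Definition Acoef : R := - ((m.-1)%:R)^-1.
Definition Gam (F : 'M[R]_m.+1) (i k : 'I_m) (y : 'rV[R]_m) : R :=
  Acoef * (F (wl k) nn * Tf (wl i) (wl i) (wl k) y - F (wl i) nn * Tf (wl k) (wl k) (wl i) y)
  + F (wl k) (wl i) * Tf nn (wl k) (wl i) y.

Lemma rhoI_diff a x : D x -> differentiable (fun y => (rho a y)^-1) x.
Proof. by move=> Dx; apply: dV; [exact: rho_diffD | exact: rho_neq0]. Qed.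

Lemma dQ x : D x -> differentiable Qf x.
Proof. by move=> Dx; apply: dprod => l; exact: rhoI_diff. Qed.

Lemma Qf_neq0 x : D x -> Qf x != 0.
Proof. by move=> Dx; apply/prodf_neq0 => l _; rewrite invr_eq0 rho_neq0. Qed.

Lemma derQ x v : D x ->
  derive Qf x v = Qf x * \sum_(l < m) - cc (wl l) v / (2 * qa (wl l) x).
Proof.
move=> Dx.
apply: etrans; first apply: (derprod _ (index_enum 'I_m) (fun l y => (rho (wl l) y)^-1) x v).
- by move=> l; exact: rhoI_diff.
- by move=> l; rewrite invr_eq0 rho_neq0.
congr (_ * _); apply: eq_bigr => l _.
rewrite derV ?rho_neq0 //; last exact: rho_diffD.
rewrite rho_deriveD // -(rho_sq _ _ Dx).
by have := rho_neq0 (wl l) x Dx; move: (rho (wl l) x) => r r0; field.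
Qed.

Lemma derM4 (f1 f2 f3 f4 : 'rV[R]_m -> R) x v :
  differentiable f1 x -> differentiable f2 x -> differentiable f3 x -> differentiable f4 x ->
  f1 x != 0 -> f2 x != 0 -> f3 x != 0 -> f4 x != 0 ->
  derive (fun y => f1 y * f2 y * f3 y * f4 y) x v =
  (f1 x * f2 x * f3 x * f4 x) *
  (derive f1 x v / f1 x + derive f2 x v / f2 x + derive f3 x v / f3 x + derive f4 x v / f4 x).
Proof.
move=> d1 d2 d3 d4 n1 n2 n3 n4.
have d12 : differentiable (fun y => f1 y * f2 y) x by exact: dM.
have d123 : differentiable (fun y => f1 y * f2 y * f3 y) x by exact: dM.
apply: etrans; first exact: (derM _ _ _ v d123 d4).
rewrite (derM _ _ _ v d12 d3) (derM _ _ _ v d1 d2).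
by field; rewrite n1 n2 n3 n4.
Qed.

Lemma derT a b c x v : D x ->
  derive (Tf a b c) x v = Tf a b c x *
    (cc a v / (2 * qa a x) + cc b v / (2 * qa b x) + cc c v / (2 * qa c x)
     + \sum_(l < m) - cc (wl l) v / (2 * qa (wl l) x)).
Proof.
move=> Dx.
apply: etrans; first apply: (derM4 _ _ _ _ _ v (rho_diffD a x Dx) (rho_diffD b x Dx) (rho_diffD c x Dx) (dQ x Dx)).
- exact: rho_neq0.
- exact: rho_neq0.
- exact: rho_neq0.
- exact: Qf_neq0.
rewrite !rho_deriveD // derQ //.
have Q0 := Qf_neq0 x Dx.
rewrite -!(rho_sq _ _ Dx) /Tf.
have := rho_neq0 a x Dx; have := rho_neq0 b x Dx; have := rho_neq0 c x Dx.
move: (rho a x) (rho b x) (rho c x) (Qf x) Q0 (\sum_(l < m) _) => ra rb rc q q0 s h1 h2 h3.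
by field; rewrite h1 h2 h3 q0.
Qed.


Lemma dCM (c : R) (f : 'rV[R]_m -> R) x : differentiable f x ->
  differentiable (fun y => c * f y) x.
Proof. by move=> df; apply: dM => //; exact: dC. Qed.

Lemma derLin (a b c d : R) (f g h : 'rV[R]_m -> R) x v :
  differentiable f x -> differentiable g x -> differentiable h x ->
  derive (fun y => a * (b * f y - c * g y) + d * h y) x v =
  a * (b * derive f x v - c * derive g x v) + d * derive h x v.
Proof.
move=> df dg dh.
have d1 : differentiable (fun y => b * f y - c * g y) x.
  by apply: dD; [exact: dCM | apply: dN; exact: dCM].
apply: etrans; first exact: (derD _ _ _ v (dCM a _ _ d1) (dCM d _ _ dh)).
rewrite (derCM _ _ _ v d1) (derCM _ _ _ v dh); congr (_ * _ + _).
apply: etrans; first exact: (derD _ _ _ v (dCM b _ _ df) (dN _ _ (dCM c _ _ dg))).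
by rewrite (derN _ _ v (dCM c _ _ dg)) (derCM _ _ _ v df) (derCM _ _ _ v dg).
Qed.

Lemma dT a b c x : D x -> differentiable (Tf a b c) x.
Proof.
move=> Dx; apply: dM; last exact: dQ.
by apply: dM; [apply: dM|]; exact: rho_diffD.
Qed.

Lemma sum_Ls i x : \sum_(l < m) - cc (wl l) (ecoord R i) / (2 * qa (wl l) x) =
  - (2 * qa (wl i) x)^-1.
Proof.
under eq_bigr do rewrite cc_lift_e mulNr -mulrN.
by rewrite sum_delta.
Qed.

Lemma derGam (F : 'M[R]_m.+1) i k x : D x -> i != k ->
  derive (Gam F i k) x (ecoord R i) =
  Acoef * (F (wl k) nn * (Tf (wl i) (wl i) (wl k) x / (2 * qa (wl i) x)))
  - F (wl k) (wl i) * (Tf nn (wl k) (wl i) x / (2 * qa nn x)).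
Proof.
move=> Dx ik.
apply: etrans; first exact: (derLin _ _ _ _ _ _ _ _ _ (dT _ _ _ x Dx) (dT _ _ _ x Dx) (dT _ _ _ x Dx)).
have ki : (k == i) = false by rewrite eq_sym (negPf ik).
rewrite !derT // sum_Ls !cc_lift_e cc_max_e eqxx ki.
have qi := D_qa x Dx (wl i); have qk := D_qa x Dx (wl k); have qn := D_qa x Dx nn.
move: (qa (wl i) x) (qa (wl k) x) (qa nn x) qi qk qn => a b c ha hb hc.
move: (Tf _ _ _ x) (Tf _ _ _ x) (Tf _ _ _ x) => t1 t2 t3.
rewrite /= ?mulr1n ?mulr0n.
by field; rewrite !gt_eqF.
Qed.


Lemma F_diag (F : 'M[R]_m.+1) a : F^T = - F -> F a a = 0.
Proof.
move=> hF; have : F^T a a = (- F) a a by rewrite hF.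
rewrite !mxE => h; lra.
Qed.

Lemma F_anti (F : 'M[R]_m.+1) a b : F^T = - F -> F b a = - F a b.
Proof. by move=> hF; have := congr1 (fun M : 'M[R]_m.+1 => M a b) hF; rewrite !mxE. Qed.

Lemma Gam_kk F k : F^T = - F -> Gam F k k = fun _ => 0.
Proof. by move=> hF; apply: funext => y; rewrite /Gam F_diag // subrr mulr0 mul0r addr0. Qed.

Lemma sum_neq (f : 'I_m -> R) k : \sum_(i | i != k) f i = \sum_i f i - f k.
Proof. rewrite [X in _ = X - _](bigD1 k) //=; ring. Qed.

Lemma Div (F : 'M[R]_m.+1) k x : F^T = - F -> D x -> (2 <= m)%N ->
  \sum_i derive (Gam F i k) x (ecoord R i) =
  - (rho (wl k) x * Qf x / (2 * rho nn x)) * \sum_b F (wl k) b * rho b x.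
Proof.
move=> hF Dx hm.
rewrite (bigD1 k) //= Gam_kk // derC add0r.
have E : forall i, i != k -> derive (Gam F i k) x (ecoord R i) =
    Acoef * F (wl k) nn * (rho (wl k) x * Qf x / 2)
    - F (wl k) (wl i) * rho (wl i) x * (rho (wl k) x * Qf x / (2 * rho nn x)).
  move=> i ik; rewrite derGam // /Tf -!(rho_sq _ _ Dx).
  have := rho_neq0 (wl i) x Dx; have := rho_neq0 nn x Dx.
  move: (rho (wl i) x) (rho nn x) (rho (wl k) x) (Qf x) => ri rn rk q h1 h2.
  by field; rewrite h1 h2.
rewrite (eq_bigr _ E) sumrB sum_neq sum_neq sumr_const card_ord F_diag // mul0r mul0r subr0.
rewrite sum_ord_max.
have Am : Acoef * (m%:R - 1) = -1.
  have mE : (m%:R - 1 : R) = (m.-1)%:R by rewrite -{1}(prednK (ltnW hm)) -natr1 addrK.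
  have m1 : (m.-1)%:R != 0 :> R by rewrite pnatr_eq0; case: (m) hm => [|[|n]].
  by rewrite mE /Acoef mulNr mulVf.
have -> : Acoef * F (wl k) nn * (rho (wl k) x * Qf x / 2) *+ m -
    Acoef * F (wl k) nn * (rho (wl k) x * Qf x / 2) =
    (Acoef * (m%:R - 1)) * F (wl k) nn * (rho (wl k) x * Qf x / 2).
  by rewrite -mulr_natr; ring.
rewrite Am -mulr_suml.
have := rho_neq0 nn x Dx.
move: (rho nn x) (rho (wl k) x) (Qf x) (\sum_(i < m) _) => rn rk q s h.
by field.
Qed.


Definition Gmat (F : 'M[R]_m.+1) (y : 'rV[R]_m) : 'M[R]_m := \matrix_(i, k) Gam F i k y.
Definition gam (F : 'M[R]_m.+1) (y : 'rV[R]_m) : 'M[R]_m :=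
  (\prod_a rho a y) *: (gmat y *m Gmat F y *m gmat y).

Lemma gmat_sym (y : 'rV[R]_m) : (gmat y)^T = gmat y.
Proof.
apply/matrixP => i j; rewrite mxE !gmatE.
by apply: eq_bigr => a _; rewrite [cc a (ecoord R j) * _]mulrC.
Qed.

Lemma Gmat_anti F (y : 'rV[R]_m) : F^T = - F -> (Gmat F y)^T = - Gmat F y.
Proof.
move=> hF; apply/matrixP => i k; rewrite !mxE /Gam (F_anti F (wl i) (wl k) hF).
rewrite /Tf; ring.
Qed.

Lemma gam_anti F (y : 'rV[R]_m) : F^T = - F -> (gam F y)^T = - gam F y.
Proof.
move=> hF; rewrite /gam linearZ /= !trmx_mul gmat_sym Gmat_anti //.
by rewrite mulNmx mulmxN mulmxA scalerN.
Qed.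

Lemma Alg_rho2I a : Alg (fun y => (rho a y)^-1 * (rho a y)^-1).
Proof. exact: (AlgM (AlgI a) (AlgI a)). Qed.

Lemma Alg_gmat j k : Alg (fun y => gmat y j k).
Proof.
apply: (AlgE (Alg_sum _ _ (fun a => AlgM (AlgC (cc a (ecoord R j) * cc a (ecoord R k))) (Alg_rho2I a)))).
move=> y Dy; rewrite gmatE; apply: eq_bigr => a _.
by rewrite -invfM -expr2 rho_sq.
Qed.

Lemma Alg_Qf : Alg Qf.
Proof. exact: (Alg_prod _ _ (fun l => AlgI (wl l))). Qed.

Lemma Alg_Tf a b c : Alg (Tf a b c).
Proof. exact: (AlgM (AlgM (AlgM (AlgR a) (AlgR b)) (AlgR c)) Alg_Qf). Qed.

Lemma Alg_Gam F i k : Alg (Gam F i k).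
Proof.
apply: (AlgE (AlgD (AlgM (AlgC Acoef) (AlgD (AlgM (AlgC (F (wl k) nn)) (Alg_Tf (wl i) (wl i) (wl k)))
   (AlgM (AlgC (- F (wl i) nn)) (Alg_Tf (wl k) (wl k) (wl i))))) (AlgM (AlgC (F (wl k) (wl i))) (Alg_Tf nn (wl k) (wl i))))).
by move=> y _; rewrite /Gam; ring.
Qed.

Lemma Alg_prodrho : Alg (fun y => \prod_a rho a y).
Proof. exact: (Alg_prod _ _ (fun a => AlgR a)). Qed.

Lemma Alg_gam F a b : Alg (fun y => gam F y a b).
Proof.
apply: (AlgE (AlgM Alg_prodrho (Alg_sum _ _ (fun l => AlgM (Alg_sum _ _ (fun j => AlgM (Alg_gmat a j) (Alg_Gam F j l))) (Alg_gmat l b))))).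
move=> y _; rewrite /gam; set G := gmat y; clearbody G.
by rewrite !mxE; apply: congr1; apply: eq_bigr => l _; rewrite !mxE; congr (_ * _); apply: eq_bigr => j _; rewrite !mxE.
Qed.

Lemma two_form_gam F : F^T = - F -> two_form (gam F).
Proof.
move=> hF; split; first by move=> x _; exact: gam_anti.
by move=> a b; apply: Alg_smooth; exact: Alg_gam.
Qed.


Lemma prod_rho_ge0 x : D x -> 0 <= \prod_a rho a x.
Proof. by move=> Dx; apply: prodr_ge0 => a _; exact: ltW (rho_gt0 a x Dx). Qed.

Lemma prod_rho_neq0 x : D x -> \prod_a rho a x != 0.
Proof. by move=> Dx; apply/prodf_neq0 => a _; exact: rho_neq0. Qed.

Lemma sqrt_det x : D x -> Num.sqrt (\det (gmat x)) = (\prod_a rho a x)^-1.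
Proof.
move=> Dx; rewrite det_gmat //.
have -> : \prod_a qa a x = (\prod_a rho a x) ^+ 2.
  by rewrite -prodrXl; apply: eq_bigr => a _; rewrite rho_sq.
rewrite sqrtrV ?exprn_ge0 ?prod_rho_ge0 // sqrtr_sqr ger0_norm //.
exact: prod_rho_ge0.
Qed.

Lemma gmat_unit x : D x -> gmat x \in unitmx.
Proof.
move=> Dx; rewrite unitmxE det_gmat // unitfE invr_eq0.
by apply/prodf_neq0 => a _; rewrite gt_eqF // D_qa.
Qed.

Lemma inner_eq F x i k : D x ->
  Num.sqrt (\det (gmat x)) * (invmx (gmat x) *m gam F x *m invmx (gmat x)) i k = Gam F i k x.
Proof.
move=> Dx; rewrite sqrt_det // /gam.
have U := gmat_unit x Dx.
set G := gmat x; set c := \prod_a rho a x.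
have -> : invmx G *m (c *: (G *m Gmat F x *m G)) *m invmx G = c *: Gmat F x.
  by rewrite -scalemxAr -scalemxAl !mulmxA mulVmx // mul1mx -mulmxA mulmxV // mulmx1.
rewrite !mxE mulrA mulVf ?mul1r //.
exact: prod_rho_neq0.
Qed.

Lemma rFr (F : 'M[R]_m.+1) x : F^T = - F ->
  \sum_a rho a x * \sum_b F a b * rho b x = 0.
Proof.
move=> hF.
set X := \sum_a _.
have : X = - X.
  rewrite {1}/X.
  under eq_bigr do rewrite mulr_sumr.
  rewrite exchange_big /X -sumrN; apply: eq_bigr => a _.
  rewrite mulr_sumr -sumrN; apply: eq_bigr => b _.
  by rewrite (F_anti F a b hF); ring.
move=> h; lra.
Qed.


Lemma part2 (F : 'M[R]_m.+1) x : F^T = - F -> D x -> (2 <= m)%N ->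
  Tform F x = codiff2 (gam F) x.
Proof.
move=> hF Dx hm.
apply/rowP => j; rewrite /codiff2 /Tform [LHS]mxE [RHS]mxE.
rewrite der_sqrtq // alphaW_simpl ?eta_rho // quadE.
set FR := fun a => \sum_b F a b * rho b x.
have PQ : (\prod_a rho a x) * Qf x = rho nn x.
  rewrite prod_ord_max /Qf prodfV.
  have : \prod_(i < m) rho (wl i) x != 0 by apply/prodf_neq0 => l _; exact: rho_neq0.
  move: (\prod_(i < m) rho (wl i) x) => p p0.
  by field.
have Hk : forall k, gmat x j k / Num.sqrt (\det (gmat x)) *
     \sum_(i < m) derive (fun y => Num.sqrt (\det (gmat y)) *
        (invmx (gmat y) *m gam F y *m invmx (gmat y)) i k) x (ecoord R i) =
     - (gmat x j k * (rho (wl k) x * FR (wl k) / 2)).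
  move=> k.
  have Hi : forall i, derive (fun y => Num.sqrt (\det (gmat y)) *
        (invmx (gmat y) *m gam F y *m invmx (gmat y)) i k) x (ecoord R i) =
        derive (Gam F i k) x (ecoord R i).
    move=> i; apply: near_derive; apply: filterS (D_near x Dx) => y Dy.
    exact: inner_eq.
  rewrite (eq_bigr _ (fun i _ => Hi i)) Div // sqrt_det // invrK -/(FR (wl k)).
  have := rho_neq0 nn x Dx; rewrite -PQ.
  move: (\prod_a rho a x) (Qf x) (gmat x j k) (rho (wl k) x) (FR (wl k)) => p q g r f h.
  by field; move: h; rewrite mulf_eq0 negb_or andbC.
rewrite (eq_bigr _ (fun k _ => Hk k)) sumrN opprK.
have Sk : forall a, \sum_(k < m) cc a (ecoord R k) * (rho (wl k) x * FR (wl k) / 2) =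
    rho a x * FR a / 2.
  move=> a; case: (unliftP ord_max a) => [l ->|->].
    under eq_bigr do rewrite cc_lift_e eq_sym.
    by rewrite sum_delta.
  under eq_bigr do rewrite cc_max_e mulN1r.
  rewrite sumrN -mulr_suml.
  have := rFr F x hF; rewrite sum_ord_max => h.
  rewrite /FR in h *.
  move: h; move: (\sum_(i < m) _) (rho nn x * _) => s t h.
  lra.
have -> : \sum_(i < m) gmat x j i * (rho (wl i) x * FR (wl i) / 2) =
    \sum_a cc a (ecoord R j) / qa a x * (rho a x * FR a / 2).
  under eq_bigr => i _ do rewrite gmatE mulr_suml.
  rewrite exchange_big /=; apply: eq_bigr => a _.
  rewrite -Sk mulr_sumr; apply: eq_bigr => k _; ring.
have -> : \sum_b (\sum_a etav (ecoord R j) x 0 a * F a b) * sqrtq x 0 b =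
    \sum_a etav (ecoord R j) x 0 a * FR a.
  under eq_bigr do rewrite mulr_suml.
  rewrite exchange_big /=; apply: eq_bigr => a _.
  rewrite /FR mulr_sumr; apply: eq_bigr => b _; rewrite sqrtqE; ring.
apply: eq_bigr => a _; rewrite mxE -(rho_sq _ _ Dx).
have := rho_neq0 a x Dx; move: (rho a x) => r r0.
by field.
Qed.


Lemma Tform_add (S F : 'M[R]_m.+1) x : Tform (S + F) x = Tform S x + Tform F x.
Proof. by apply/rowP => i; rewrite !mxE /alphaW mulmxDr mulmxDl mxE. Qed.

Lemma Alg_U (S : 'M[R]_m.+1) :
  Alg (fun y => 2^-1 * (sqrtq y *m S *m (sqrtq y)^T) 0 0).
Proof.
apply: (AlgE (AlgM (AlgC 2^-1) (Alg_sum _ _ (fun b => AlgM (Alg_sum _ _ (fun a => AlgM (AlgR a) (AlgC (S a b)))) (AlgR b))))).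
move=> y _; rewrite quadE; congr (_ * _); apply: eq_bigr => b _.
by rewrite sqrtqE; congr (_ * _); apply: eq_bigr => a _; rewrite sqrtqE.
Qed.

End Setting.

Theorem mainTheorem1 (R : realType) (m : nat) (hm : (2 <= m)%N)
    (V S F : 'M[R]_m.+1)
    (hV : V = S + F) (hS : S^T = S) (hF : F^T = - F) :
  let U := fun x : 'rV[R]_m => 2^-1 * (sqrtq x *m S *m (sqrtq x)^T) 0 0 in
  (smooth_on (chart_dom (R:=R) (m:=m)) U /\
   forall x, chart_dom x -> Tform S x = dfun U x) /\
  exists gamma : 'rV[R]_m -> 'M[R]_m,
    two_form gamma /\
    (forall x, chart_dom x -> Tform F x = codiff2 gamma x) /\
    (forall x, chart_dom x -> Tform V x = dfun U x + codiff2 gamma x).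
Proof.
move=> U; split.
  split; first by apply: Alg_smooth; exact: Alg_U.
  by move=> x Dx; apply: part1.
exists (@gam R m F); split; first by apply: two_form_gam.
split; first by move=> x Dx; apply: part2.
move=> x Dx; rewrite hV Tform_add (part1 _ _ _ _ hS Dx) (part2 _ _ _ _ hF Dx hm).
by [].
Qed.
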